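(* Let $n$ be a positive integer and let $s,t$ be real numbers with $t>0$ and $\dfrac{s}{t} > \dfrac{4}{5} n^2$. Then the maximum of $|\det A|$ over all $A \in \mathcal{G}_s^{n\times n}([0,t])$ equals $$s^{n-1}t + \Big\lfloor \frac{n}{2}\Big\rfloor \Big\lfloor \frac{n-1}{2}\Big\rfloor s^{n-3}t^3.$$
   Context: For a real number $s$, a positive integer $n$ and a set $P \subseteq \mathbb{R}$, $\mathcal{G}_s^{n\times n}(P)$ denotes the set of all $n\times n$ real upper Hessenberg matrices $A=(a_{ij})$ with $a_{i+1,i} = s$ for $1\le i\le n-1$, $a_{ij}=0$ for $i > j+1$, and $a_{ij}\in P$ for all $i \le j$. *)

(* Defs.v *)
From mathcomp Require Import all_boot all_order all_algebra.
Set Implicit Arguments. Unset Strict Implicit. Unset Printing Implicit Defensive.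
Import Order.TTheory GRing.Theory Num.Theory.
Local Open Scope ring_scope.

(* A \in G_s^{n x n}(P): upper Hessenberg, subdiagonal entries equal to s,
   entries below the subdiagonal zero, entries on/above diagonal in P. *)
Definition in_hessG (R : nzRingType) (n : nat) (s : R) (P : pred R)
    (A : 'M[R]_n) : Prop :=
  forall i j : 'I_n,
    (nat_of_ord i = j.+1 -> A i j = s) /\
    ((j.+1 < i)%N -> A i j = 0) /\
    ((i <= j)%N -> P (A i j)).

Definition itv0 (R : numDomainType) (t : R) : pred R := fun x => (0 <= x) && (x <= t).

(* Main.v *)
Require Import Defs.
From mathcomp Require Import all_boot all_order all_algebra.
From mathcomp Require Import zify ring lra.
Import Order.TTheory GRing.Theory Num.Theory.
Section NatFacts.
Local Open Scope nat_scope.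
Lemma x1 (N i j : nat) : i + j = N -> i * j <= N.+1./2 * N./2.
Proof.
rewrite -!divn2 => e.
have [y [r [hN hr]]] : exists y r, N = 2*y + r /\ r <= 1.
  exists (N %/ 2), (N %% 2). split; lia.
have -> : N.+1 %/ 2 = y + r by lia.
have -> : N %/ 2 = y by lia.
have [hi|hi] : i <= y \/ j <= y by lia.
- have : (y - i) * (y + r - i) >= 0 by nia. nia.
- have : (y - j) * (y + r - j) >= 0 by nia. nia.
Qed.
Lemma x2 (N : nat) : N - N./2 = N.+1./2.
Proof. rewrite -!divn2. lia. Qed.
End NatFacts.

Local Open Scope ring_scope.

Section Det.
Variable R : comNzRingType.
Variables (a : nat -> nat -> R) (s : R) (h : nat -> R) (K : nat).
Hypothesis Hs : forall j, (j.+1 < K)%N -> a j.+1 j = s.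
Hypothesis Hz : forall i j, (i < K)%N -> (j.+1 < i)%N -> a i j = 0.
Hypothesis Hh : forall c, (c.+1 < K)%N ->
  s * h c = a 0 c - \sum_(r < c) a r.+1 c * h r.

Definition Mk (k : nat) (v : nat -> R) : 'M[R]_k :=
  \matrix_(i, j) if (j : nat) == k.-1 then v i else a i j.

Lemma detMk k : (k.+1 <= K)%N -> forall v,
  \det (Mk k.+1 v) = (-s) ^+ k * (v 0%N - \sum_(r < k) v r.+1 * h r).
Proof.
elim: k => [|k IH] hk v.
  by rewrite det_mx11 big_ord0 subr0 expr0 mul1r /Mk mxE.
rewrite (expand_det_row _ ord_max) big_ord_recr /= big_ord_recr /=.
rewrite big1 ?add0r; last first.
  move=> j _; rewrite /Mk mxE /=.
  have hj := ltn_ord j.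
  case: eqP => [/= E|_]; first lia.
  by rewrite Hz ?mul0r //=; lia.
have E1 : row' ord_max (col' (widen_ord (leqnSn k.+1) ord_max) (Mk k.+2 v)) = Mk k.+1 v.
  apply/matrixP => i j; rewrite !mxE /= /bump /=.
  have hi := ltn_ord i; have hj := ltn_ord j.
  rewrite (_ : (k < i)%N = false) ?add0n; last by rewrite ltnNge -ltnS hi.
  case: (leqP k j) => hkj /=.
    have -> : (j : nat) = k by apply/eqP; rewrite eqn_leq hkj -ltnS hj.
    by rewrite add1n !eqxx.
  rewrite add0n.
  have -> : ((j : nat) == k.+1) = false by apply/negbTE/eqP; lia.
  by have -> : ((j : nat) == k) = false by apply/negbTE/eqP; lia.
have E2 : row' ord_max (col' ord_max (Mk k.+2 v)) = Mk k.+1 (fun i => a i k).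
  apply/matrixP => i j; rewrite !mxE /= /bump /=.
  have hi := ltn_ord i; have hj := ltn_ord j.
  rewrite (_ : (k < i)%N = false) ?add0n; last by rewrite ltnNge -ltnS hi.
  rewrite (_ : (k < j)%N = false) ?add0n; last by rewrite ltnNge -ltnS hj.
  have -> : ((j : nat) == k.+1) = false by apply/negbTE/eqP; lia.
  by case: eqP => // ->.
rewrite /cofactor E1 E2 !IH ?(ltnW hk) //.
rewrite /Mk !mxE /= eqxx.
have -> : ((k : nat) == k.+1) = false by apply/negbTE/eqP; lia.
rewrite Hs // -Hh //.
rewrite big_ord_recr /=.
have -> : ((-1) ^+ (k.+1 + k) = - 1 :> R).
  by rewrite -signr_odd addSn /= oddD addbb.
have -> : ((-1) ^+ (k.+1 + k.+1) = 1 :> R).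
  by rewrite -signr_odd addSn addnS /= oddD addbb.
rewrite exprS.
ring.
Qed.
End Det.
Arguments Mk {R} a k v.
Arguments detMk {R a s h K} Hs Hz Hh k.

Lemma arA1 (R : realFieldType) (e i j A B x M : R) : 0 <= e * i -> x <= e * (1 + B) ->
  B + e * i * (A + (j + 1) * e * (1 + B)) <= M ->
  B + 0 + e * i * (A + x + j * e * (1 + (B + 0))) <= M.
Proof.
move=> h1 h2 h3.
have P : e * i * x <= e * i * (e * (1 + B)) by apply: ler_wpM2l.
lra.
Qed.

Lemma arA2 (R : realFieldType) (e i j A B y M : R) : 0 < e -> 0 <= i -> 0 <= j -> 0 <= A -> 0 <= B ->
  y <= e * A -> M <= 1 ->
  B + e * (i + 1) * (A + j * e * (1 + B)) <= M ->
  B + e * (i + j + 1) * A <= M ->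
  B + y + e * i * (A + j * e * (1 + (B + y))) <= M.
Proof.
move=> he hi hj hA hB hy hM H1 H2.
have F0 : i * y <= i * (e * A) by apply: ler_wpM2l.
have G1 : 0 <= e * j * A by rewrite mulr_ge0 // mulr_ge0 //; lra.
have G2 : 0 <= e * A by rewrite mulr_ge0 //; lra.
have F1 : i * y <= 1 by lra.
have F2 : e * e * j * (i * y) <= e * e * j * 1.
  by apply: ler_wpM2l => //; rewrite !mulr_ge0 //; lra.
have F3 : 0 <= e * e * j * B by rewrite !mulr_ge0 //; lra.
lra.
Qed.

Section Bound.
Variable R : realFieldType.
Variables (a : nat -> nat -> R) (s t : R) (h : nat -> R) (N m : nat).
Hypothesis spos : 0 < s.
Hypothesis tpos : 0 < t.
Hypothesis Ha : forall i j, (i <= j)%N -> (j <= N)%N -> 0 <= a i j <= t.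
Hypothesis Hh : forall c, (c < N)%N ->
  s * h c = a 0 c - \sum_(r < c) a r.+1 c * h r.
Hypothesis Hm : forall i j, (i + j = N)%N -> (i * j <= m)%N.
Let e := t / s.
Hypothesis He1 : e ^+ 2 * m%:R <= 1.
Hypothesis He2 : N%:R * e <= 1.

Definition pp (y : R) := if 0 <= y then y else 0.
Definition nn (y : R) := if 0 <= y then 0 else - y.
Lemma pp_ge0 y : 0 <= pp y. Proof. rewrite /pp; case: ifP => //; lra. Qed.
Lemma nn_ge0 y : 0 <= nn y.
Proof. rewrite /nn; case: ifP => // /negbT; rewrite -ltNge; lra. Qed.
Lemma pn_term x y : 0 <= x <= t -> x * y <= t * pp y /\ - (x * y) <= t * nn y.
Proof.
move=> /andP [h0 h1]; rewrite /pp /nn; case: ifP => [hy|/negbT]; last rewrite -ltNge => hy.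
  split; nra.
split; nra.
Qed.

Let Ap c := \sum_(r < c) pp (h r).
Let Bm c := \sum_(r < c) nn (h r).
Lemma Ap_ge0 c : 0 <= Ap c. Proof. by apply: sumr_ge0 => r _; apply: pp_ge0. Qed.
Lemma Bm_ge0 c : 0 <= Bm c. Proof. by apply: sumr_ge0 => r _; apply: nn_ge0. Qed.
Lemma e_gt0 : 0 < e. Proof. by rewrite /e divr_gt0. Qed.

Lemma sum_up c (F : nat -> R) : (forall r, (r <= c)%N -> 0 <= F r <= t) ->
  \sum_(r < c) F r.+1 * h r <= t * Ap c /\ - (\sum_(r < c) F r.+1 * h r) <= t * Bm c.
Proof.
move=> HF; split.
  rewrite /Ap mulr_sumr; apply: ler_sum => r _.
  by case: (pn_term _ (h r) (HF r.+1 (ltn_ord r))).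
rewrite /Bm mulr_sumr -sumrN; apply: ler_sum => r _.
by case: (pn_term _ (h r) (HF r.+1 (ltn_ord r))).
Qed.

Lemma div_le x y : s * x <= t * y -> x <= e * y.
Proof.
move=> H; rewrite -(ler_pM2l spos).
have -> : s * (e * y) = t * y by rewrite /e mulrA [s * _]mulrC divfK // lt0r_neq0.
done.
Qed.

Lemma step_up c : (c < N)%N -> pp (h c) <= e * (1 + Bm c).
Proof.
move=> hc.
have [_ H2] := sum_up c (fun r => a r c) (fun r hr => Ha _ _ hr (ltnW hc)).
have H0 := Ha _ _ (leq0n c) (ltnW hc).
move/andP: H0 => [H0 H0'].
have Hs : s * h c <= t * (1 + Bm c) by rewrite Hh //; lra.
have := div_le _ _ Hs.
have := Bm_ge0 c; have := e_gt0.
rewrite /pp; case: ifP => // _ he hb _; apply: mulr_ge0; lra.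
Qed.

Lemma step_lo c : (c < N)%N -> nn (h c) <= e * Ap c.
Proof.
move=> hc.
have [H1 _] := sum_up c (fun r => a r c) (fun r hr => Ha _ _ hr (ltnW hc)).
have H0 := Ha _ _ (leq0n c) (ltnW hc).
move/andP: H0 => [H0 H0'].
have Hs : s * (- h c) <= t * Ap c by rewrite mulrN Hh //; lra.
have := div_le _ _ Hs.
have := Ap_ge0 c; have := e_gt0.
rewrite /nn; case: ifP => // _ he ha _; apply: mulr_ge0; lra.
Qed.

Lemma inv c : (c <= N)%N -> forall i j, (i + j + c = N)%N ->
  Bm c + e * i%:R * (Ap c + j%:R * e * (1 + Bm c)) <= e ^+ 2 * m%:R.
Proof.
elim: c => [|c IH] hc i j hij.
  rewrite /Ap /Bm !big_ord0 !add0r addr0 mulr1.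
  have := Hm i j (etrans (esym (addn0 _)) hij).
  rewrite -(ler_nat R) natrM => Hij.
  have := e_gt0 => he.
  have : e ^+ 2 * (i%:R * j%:R) <= e ^+ 2 * m%:R.
    by rewrite ler_pM2l // exprn_gt0.
  suff -> : e * i%:R * (j%:R * e) = e ^+ 2 * (i%:R * j%:R) by [].
  by rewrite expr2; ring.
have hcN : (c < N)%N by [].
have IHc := IH (ltnW hc).
rewrite /Ap /Bm !big_ord_recr /= -/(Ap c) -/(Bm c).
have he := e_gt0.
have hA := Ap_ge0 c; have hB := Bm_ge0 c.
have hup := step_up _ hcN; have hlo := step_lo _ hcN.
have hi : 0 <= i%:R :> R by apply: ler0n.
have hj : 0 <= j%:R :> R by apply: ler0n.
rewrite /pp /nn in hup hlo *.
case: ifP => hh in hup hlo *.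
  have e0 : (i + j.+1 + c = N)%N by move: hij; clear; lia.
  have I1 := IHc i j.+1 e0.
  rewrite -natr1 in I1.
  apply: arA1 I1 => //; exact: mulr_ge0 (ltW he) hi.
have e1 : (i.+1 + j + c = N)%N by move: hij; clear; lia.
have e2 : ((i + j).+1 + 0 + c = N)%N by move: hij; clear; lia.
have I1 := IHc i.+1 j e1.
have I2 := IHc (i + j).+1 0 e2.
rewrite -natr1 in I1; rewrite -natr1 natrD in I2.
rewrite mulr0n !mul0r addr0 in I2.
rewrite addr0; apply: arA2 I1 I2 => //.
Qed.

Lemma Bbound c : (c <= N)%N -> Bm c <= e ^+ 2 * m%:R.
Proof.
move=> hc; have := inv _ hc (N - c) 0 ltac:(move: hc; clear; lia).
have G : 0 <= e * (N - c)%:R * Ap c.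
  by rewrite mulr_ge0 ?Ap_ge0 // mulr_ge0 ?ler0n // ltW // e_gt0.
rewrite mulr0n !mul0r addr0; lra.
Qed.

Lemma Abound c : (c <= N)%N -> Ap c <= c%:R * (e * (1 + e ^+ 2 * m%:R)).
Proof.
elim: c => [|c IH] hc; first by rewrite /Ap big_ord0 mul0r.
rewrite /Ap big_ord_recr /= -/(Ap c) -natr1.
have := IH (ltnW hc); have := step_up _ hc; have := Bbound _ (ltnW hc).
have he := e_gt0 => HB Hup HA.
have : e * (1 + Bm c) <= e * (1 + e ^+ 2 * m%:R) by apply: ler_wpM2l; lra.
lra.
Qed.

Lemma final_bound :
  `|a 0 N - \sum_(r < N) a r.+1 N * h r| <= t * (1 + e ^+ 2 * m%:R).
Proof.
have [H1 H2] := sum_up N (fun r => a r N) (fun r hr => Ha _ _ hr (leqnn N)).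
have /andP[H0 H0'] := Ha _ _ (leq0n N) (leqnn N).
have HB := Bbound _ (leqnn N).
have HA := Abound _ (leqnn N).
have he := e_gt0.
have hq : 0 <= e ^+ 2 * m%:R by apply: mulr_ge0; [apply: exprn_ge0; apply: ltW | apply: ler0n].
have X0 : N%:R * (e * (1 + e ^+ 2 * m%:R)) <= 1 + e ^+ 2 * m%:R.
  rewrite mulrA -[X in _ <= X]mul1r; apply: ler_wpM2r => //; lra.
have X1 : t * Ap N <= t * (1 + e ^+ 2 * m%:R).
  apply: ler_wpM2l; first lra.
  apply: le_trans HA _; done.
have X2 : t * Bm N <= t * (e ^+ 2 * m%:R) by apply: ler_wpM2l => //; lra.
rewrite ler_norml; apply/andP; split; lra.
Qed.
End Bound.
Arguments final_bound {R a s t h N m}.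

Section HC.
Variables (R : fieldType) (a : nat -> nat -> R) (s : R).
Fixpoint hf (c : nat) : nat -> R :=
  match c with
  | 0 => fun _ => 0
  | c'.+1 => fun r => if (r < c')%N then hf c' r
                      else (a 0 c' - \sum_(q < c') a q.+1 c' * hf c' q) / s
  end.
Definition hh r := hf r.+1 r.
Lemma hfE c r : (r < c)%N -> hf c r = hh r.
Proof.
elim: c => [//|c IH] hr /=.
case: ltnP => [/IH //|h2].
have -> : r = c by apply/eqP; rewrite eqn_leq h2 -ltnS hr.
by rewrite /hh /= ltnn.
Qed.
Lemma hhE c : s != 0 -> s * hh c = a 0 c - \sum_(r < c) a r.+1 c * hh r.
Proof.
move=> s0; rewrite /hh /= ltnn mulrC divfK //.
by congr (_ - _); apply: eq_bigr => r _; rewrite hfE.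
Qed.
End HC.
Arguments hh {R} a s r.

Lemma sum_if (R : nzRingType) c p (K1 K2 : R) :
  \sum_(r < c) (if (r < p)%N then K1 else K2) = (minn c p)%:R * K1 + (c - p)%:R * K2.
Proof.
elim: c => [|c IH]; first by rewrite big_ord0 min0n sub0n !mul0r addr0.
rewrite big_ord_recr /= IH.
case: (ltnP c p) => H.
  have -> : minn c.+1 p = c.+1 by lia.
  have -> : (c.+1 - p = 0)%N by lia.
  have -> : (c - p = 0)%N by lia.
  by rewrite -natr1 mulrDl mul1r addrAC.
have -> : minn c.+1 p = minn c p by lia.
have -> : (c.+1 - p = (c - p).+1)%N by lia.
have -> : minn c p = p by lia.
by rewrite -natr1 mulrDl mul1r addrA.
Qed.

Lemma convM (R : realFieldType) (N m : nat) (s t : R) : 0 < s ->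
  ((N < 2)%N -> m = 0%N) ->
  s ^+ N * (t * (1 + (t / s) ^+ 2 * m%:R)) = s ^+ N * t + m%:R * s ^+ (N.+1 - 3) * t ^+ 3.
Proof.
move=> sp; case: N => [|[|N]] hm.
- by rewrite hm // mulr0n !mulr0 !mul0r !addr0 mulr1.
- by rewrite hm // mulr0n !mulr0 !mul0r !addr0 mulr1.
have -> : (N.+3 - 3 = N)%N by lia.
rewrite !exprS; field; exact: lt0r_neq0.
Qed.

Lemma A_Mk (R : comNzRingType) N (A : 'M[R]_N.+1) (a : nat -> nat -> R) :
  (forall i j : 'I_N.+1, A i j = a i j) -> A = Mk a N.+1 (fun i => a i N).
Proof.
move=> H; apply/matrixP => i j; rewrite /Mk mxE /=.
case: eqP => [E|_]; last exact: H.
by rewrite H E.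
Qed.

Ltac clr := repeat match goal with
 | H : ?T |- _ => lazymatch T with
     | is_true (leq _ _) => fail
     | @eq nat _ _ => fail
     | nat => fail
     | ordinal _ => fail
     | _ => clear H end
 end.

Theorem theorem2p9 (R : realFieldType) (n : nat) (s t : R) :
  (0 < n)%N -> 0 < t -> 4 / 5 * (n ^ 2)%:R < s / t ->
  let M := s ^+ n.-1 * t + ((n./2 * (n.-1)./2)%N)%:R * s ^+ (n - 3) * t ^+ 3 in
  (exists A : 'M[R]_n, in_hessG s (itv0 t) A /\ `|\det A| = M) /\
  (forall A : 'M[R]_n, in_hessG s (itv0 t) A -> `|\det A| <= M).
Proof.
case: n => [//|N] _ tp hst.
set m := (N.+1./2 * N.+1.-1./2)%N.
move=> M.
have sp : 0 < s.
  have h0 : 0 <= 4 / 5 * ((N.+1) ^ 2)%:R :> R by apply: mulr_ge0; [lra | apply: ler0n].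
  have : 0 < s / t by apply: le_lt_trans hst.
  by rewrite pmulr_lgt0 ?invr_gt0.
set e := t / s.
have ep : 0 < e by rewrite divr_gt0.
have hK : ((N.+1) ^ 2)%:R * e < 5 / 4 :> R.
  have := hst; rewrite -(ltr_pM2r ep).
  have -> : s / t * e = 1 by rewrite /e; field; apply/andP; split; exact: lt0r_neq0.
  move=> H; have : 4 / 5 * (((N.+1) ^ 2)%:R * e) < 1 by rewrite mulrA.
  lra.
have hm4 : (4 * m <= (N.+1) ^ 2)%N by rewrite /m -!divn2; nia.
have h2N : (2 * N <= (N.+1) ^ 2)%N by nia.
have hK1 : (1 <= (N.+1) ^ 2)%N by nia.
have hm4' : 4 * m%:R <= ((N.+1) ^ 2)%:R :> R by rewrite -(ler_nat R) natrM in hm4.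
have h2N' : 2 * N%:R <= ((N.+1) ^ 2)%:R :> R by rewrite -(ler_nat R) natrM in h2N.
have hK1' : 1 <= ((N.+1) ^ 2)%:R :> R by rewrite -(ler_nat R) in hK1.
set K := ((N.+1) ^ 2)%:R in hK hm4' h2N' hK1'.
have He2 : N%:R * e <= 1.
  have : 2 * N%:R * e <= K * e by apply: ler_wpM2r => //; exact: ltW.
  lra.
have He1 : e ^+ 2 * m%:R <= 1.
  have E1 : e <= 5 / 4.
    have : 1 * e <= K * e by apply: ler_wpM2r => //; exact: ltW.
    lra.
  have E2 : e * (4 * m%:R) <= e * K by apply: ler_wpM2l => //; exact: ltW.
  have E3 : e * (e * K) <= 5 / 4 * (5 / 4).
    apply: le_trans (_ : e * (5 / 4) <= _).
      by apply: ler_wpM2l; [exact: ltW | rewrite mulrC; exact: ltW].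
    by apply: ler_wpM2r => //; lra.
  have E4 : e * (4 * m%:R) * e <= e * K * e by apply: ler_wpM2r => //; exact: ltW.
  rewrite expr2.
  have : 4 * (e * e * m%:R) <= 25 / 16.
    have -> : 4 * (e * e * m%:R) = e * (4 * m%:R) * e by ring.
    have -> : (25 / 16 : R) = 5 / 4 * (5 / 4) by field.
    apply: le_trans E4 _; rewrite (_ : e * K * e = e * (e * K)); [exact: E3 | ring].
  lra.
have hm0 : (N < 2)%N -> m = 0%N by rewrite /m; case: (N) => [|[|N2]].
have HmN : forall i j, (i + j = N)%N -> (i * j <= m)%N by move=> i j; apply: x1.
have s0 : s != 0 by exact: lt0r_neq0.
split.
  pose p := N./2.
  pose aex (i j : nat) : R :=
    if i == j.+1 then s else if (j.+1 < i)%N then 0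
    else if i == 0%N then (if (j < p)%N || (j == N) then t else 0)
    else if j == N then (if (p < i)%N then t else 0)
    else if (i <= p)%N && (p <= j)%N then t else 0.
  pose hex (c : nat) : R := if (c < p)%N then t / s else - (p%:R * t ^+ 2 / s ^+ 2).
  have hpN : (p <= N)%N by rewrite /p -divn2; (clr; lia).
  exists (\matrix_(i, j) aex i j).
  have Hs : forall j, (j.+1 < N.+1)%N -> aex j.+1 j = s by move=> j _; rewrite /aex eqxx.
  have Hz : forall i j, (i < N.+1)%N -> (j.+1 < i)%N -> aex i j = 0.
    move=> i j _ hij; rewrite /aex hij.
    by have -> : (i == j.+1) = false by apply/negbTE/eqP; (clr; lia).
  have aex0 : forall j, (j <= N)%N -> aex 0 j = if (j < p)%N || (j == N) then t else 0.
    by move=> j _; rewrite /aex.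
  have aexm : forall i j, (0 < i)%N -> (i <= j)%N -> (j < N)%N ->
      aex i j = if (i <= p)%N && (p <= j)%N then t else 0.
    move=> i j h1 h2 h3; rewrite /aex.
    have -> : (i == j.+1) = false by apply/negbTE/eqP; (clr; lia).
    have -> : (j.+1 < i)%N = false by apply/negbTE; rewrite -leqNgt; (clr; lia).
    have -> : (i == 0%N) = false by apply/negbTE/eqP; (clr; lia).
    by have -> : (j == N) = false by apply/negbTE/eqP; (clr; lia).
  have aexl : forall i, (0 < i)%N -> (i <= N)%N -> aex i N = if (p < i)%N then t else 0.
    move=> i h1 h2; rewrite /aex eqxx.
    have -> : (i == N.+1) = false by apply/negbTE/eqP; (clr; lia).
    have -> : (N.+1 < i)%N = false by apply/negbTE; rewrite -leqNgt; (clr; lia).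
    by have -> : (i == 0%N) = false by apply/negbTE/eqP; (clr; lia).
  have Hh : forall c, (c.+1 < N.+1)%N ->
      s * hex c = aex 0 c - \sum_(r < c) aex r.+1 c * hex r.
    move=> c hc; rewrite ltnS in hc.
    rewrite aex0 ?(ltnW hc) //.
    have -> : (c == N) = false by apply/negbTE/eqP; (clr; lia).
    rewrite orbF /hex.
    case: (ltnP c p) => hcp.
      rewrite big1 ?subr0; first by rewrite mulrC divfK.
      move=> r _; rewrite aexm ?ltn_ord //.
      have -> : (p <= c)%N = false by apply/negbTE; rewrite -ltnNge.
      by rewrite andbF mul0r.
    rewrite (eq_bigr (fun r : 'I_c => if ((r : nat) < p)%N then t * (t / s) else 0)); last first.
      move=> r _; rewrite aexm ?ltn_ord //.
      rewrite hcp andbT ?ltnS.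
      by case: ltnP => // _; rewrite mul0r.
    rewrite sum_if mulr0 addr0.
    have -> : minn c p = p by (clr; lia).
    rewrite sub0r; field; exact: s0.
  split.
    move=> i j; rewrite !mxE; split; [|split].
    - by move=> ->; rewrite /aex eqxx.
    - by move=> hij; apply: Hz.
    - move=> hij; rewrite /aex.
      have -> : (i == j.+1 :> nat) = false by apply/negbTE/eqP; (clr; lia).
      have -> : ((j : nat).+1 < i)%N = false by apply/negbTE; rewrite -leqNgt; (clr; lia).
      rewrite /itv0.
      have g1 : (0 <= t) && (t <= t) by rewrite lexx ltW.
      have g0 : (0 <= 0 :> R) && (0 <= t) by rewrite lexx ltW.
      by repeat case: ifP => _.
  rewrite (@A_Mk _ _ (\matrix_(i, j) aex i j) aex); last by move=> i j; rewrite mxE.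
  rewrite (detMk Hs Hz Hh) //.
  rewrite aex0 // eqxx orbT.
  rewrite (eq_bigr (fun r : 'I_N => if ((r : nat) < p)%N then 0 else t * - (p%:R * t ^+ 2 / s ^+ 2))); last first.
    move=> r _; rewrite aexl ?ltn_ord //.
    rewrite /hex ?ltnS; case: ltnP => _; [by rewrite mul0r | by []].
  rewrite sum_if mulr0 add0r.
  have -> : (N - p)%N = N.+1./2 by rewrite /p x2.
  have -> : t - N.+1./2%:R * (t * - (p%:R * t ^+ 2 / s ^+ 2)) = t * (1 + e ^+ 2 * m%:R).
    by rewrite /m /e /p natrM; field.
  rewrite normrM normrX normrN (gtr0_norm sp) ger0_norm; last first.
    apply: mulr_ge0; first exact: ltW.
    apply: addr_ge0; first lra.
    apply: mulr_ge0; [apply: exprn_ge0; exact: ltW | apply: ler0n].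
  by rewrite /M /e convM.
move=> A HA.
pose a (i j : nat) : R := A (inord i) (inord j).
have Ha : forall i j, (i <= j)%N -> (j <= N)%N -> 0 <= a i j <= t.
  move=> i j hij hj.
  have [_ [_ H3]] := HA (inord i) (inord j).
  by apply: H3; rewrite !inordK //; (clr; lia).
have Hs : forall j, (j.+1 < N.+1)%N -> a j.+1 j = s.
  move=> j hj; have [H1 _] := HA (inord j.+1) (inord j).
  by apply: H1; rewrite !inordK //; (clr; lia).
have Hz : forall i j, (i < N.+1)%N -> (j.+1 < i)%N -> a i j = 0.
  move=> i j hi hij; have [_ [H2 _]] := HA (inord i) (inord j).
  by apply: H2; rewrite !inordK //; (clr; lia).
have Hh : forall c, (c.+1 < N.+1)%N ->
    s * hh a s c = a 0 c - \sum_(r < c) a r.+1 c * hh a s r.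
  by move=> c _; apply: hhE.
rewrite (@A_Mk _ _ A a); last by move=> i j; rewrite /a !inord_val.
rewrite (detMk Hs Hz Hh) //.
rewrite normrM normrX normrN (gtr0_norm sp).
have Hh' : forall c, (c < N)%N -> s * hh a s c = a 0 c - \sum_(r < c) a r.+1 c * hh a s r.
  by move=> c _; apply: hhE.
have := final_bound sp tp Ha Hh' HmN He1 He2.
rewrite -/e => HB.
rewrite /M -/e -convM //.
apply: ler_wpM2l => //; exact: exprn_ge0 (ltW sp).
Qed.
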